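(* Let $N\ge1$, $1\le C\le N$, $T\ge 1$ be integers and $x^T\in[N]^T$ any request sequence. For every integer $k\ge 0$, $$T\big(\tilde{\mu}_k(x^T)-\pi^{\textsc{LZ}}(x^T)\big)\le \delta\big(c(T),L_T^{*,LZ}\big)+k\,c(T),$$ where $\delta(B,l)=\sqrt{2BCl\ln(Ne/C)}+CB\ln(Ne/C)$, $c(T)$ is the total number of nodes of the Lempel–Ziv parse tree after the $T$ requests (which is $O(T\log N/\log T)$), and $L_T^{*,LZ}$ is the minimum number of cache misses on $x^T$ of an offline prefetcher whose state at each round is the current node of the same Lempel–Ziv tree process and which caches a fixed set of $C$ files at each node.
   Context: Caching setting: a library of $N$ unit-sized files $[N]$ and a cache holding $C$ files; in round $t$ a (possibly random) set of $C$ files is cached, then $x_t\in[N]$ is requested, giving a hit (reward 1) if $x_t$ is cached and 0 otherwise. Hit rate = expected number of hits divided by $T$. A $k$-th order Markov prefetcher is a finite-state prefetcher with state set $[N]^k$ whose state at round $t$ is $(x_{t-1},\dots,x_{t-k})$ and which caches a set $f(s)$ of $C$ files depending only on the current state $s$; $\tilde\mu_k(x^T)$ is the maximum hit rate on $x^T$ over all such prefetching functions $f$. The LZ prefetcher: maintain an $N$-ary tree, initially a root with $N$ leaf children, and a current node, initially the root. At each round the current node is the state; each node runs its own independent copy of the \textsc{Sage} caching policy, fed only with requests arriving while that node is current, and the cache is chosen by the copy at the current node. After request $x_t$, move to the child labeled $x_t$; if that child is a leaf, make it an internal node by adding $N$ leaf children and return the current node to the root. $\pi^{\textsc{LZ}}(x^T)$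 is its hit rate. \textsc{Sage} policy: with learning rate $\eta>0$ and $R(i)$ the number of past requests (in its own stream) for file $i$, set $w(i)=\exp(\eta R(i))$ and marginals $p(i)=w(i)e_{C-1}(\mathbf w_{-i})/e_C(\mathbf w)$ ($e_m$ the elementary symmetric polynomial of order $m$, $\mathbf w_{-i}$ omitting coordinate $i$; these are the file-inclusion marginals of Hedge over all $C$-subsets of $[N]$ with reward $\mathbb 1(x_t\in A)$), and cache a random $C$-set with these marginals via Madow's systematic sampling (draw $U\sim\mathrm{Unif}[0,1]$, $P_0=0$, $P_i=P_{i-1}+p(i)$, select for each $m=0,\dots,C-1$ the $j$ with $P_{j-1}\le U+m\le P_j$). The learning rate is tuned adaptively so that on any stream of length $n$ its expected hits are at least those of the best fixed $C$-set minus $\sqrt{2Cl^*\ln(Ne/C)}+C\ln(Ne/C)$, $l^*$ being the misses of the best fixed $C$-set. *)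

(* Defs.v *)
From HB Require Import structures.
From mathcomp Require Import all_boot all_order all_algebra.
From mathcomp Require Import all_classical all_reals all_analysis.
Set Implicit Arguments. Unset Strict Implicit. Unset Printing Implicit Defensive.
Import Order.TTheory GRing.Theory Num.Theory.
Local Open Scope classical_set_scope.
Local Open Scope ring_scope.

(* Files are 'I_N (0-indexed). A request sequence is x : seq 'I_N. *)

(* elementary symmetric polynomial of order m of the weights w restricted
   to the coordinates in S  (S = setT: e_m(w);  S = ~:[set i]: e_m(w_{-i})) *)
Definition esym (R : realType) (N : nat) (w : 'I_N -> R) (S : {set 'I_N}) (m : nat) : R :=
  \sum_(A : {set 'I_N} | (A \subset S) && (#|A| == m)) \prod_(i in A) w i.

Definition sage_weight (R : realType) (N : nat) (eta : seq 'I_N -> R)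
  (h : seq 'I_N) (i : 'I_N) : R := expR (eta h * (count_mem i h)%:R).

Definition sage_marg (R : realType) (N C : nat) (eta : seq 'I_N -> R)
  (h : seq 'I_N) (i : 'I_N) : R :=
  sage_weight eta h i * esym (sage_weight eta h) (~: finset.set1 i) C.-1
    / esym (sage_weight eta h) (finset.setT) C.

(* Madow's systematic sampling: cumulative sums P_{j-1} and P_j *)
Definition Pprev (R : realType) (N : nat) (p : 'I_N -> R) (j : 'I_N) : R :=
  \sum_(i : 'I_N | (i < j)%N) p i.
Definition Pcum (R : realType) (N : nat) (p : 'I_N -> R) (j : 'I_N) : R :=
  \sum_(i : 'I_N | (i <= j)%N) p i.

Definition madow_selects (R : realType) (N C : nat) (p : 'I_N -> R) (u : R) (y : 'I_N) : Prop :=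
  exists2 m : nat, (m < C)%N & Pprev p y <= u + m%:R <= Pcum p y.

(* probability (U ~ Unif[0,1]) that y is in the cache sampled by Madow *)
Definition hit_prob (R : realType) (N C : nat) (p : 'I_N -> R) (y : 'I_N) : R :=
  fine (lebesgue_measure ([set u : R | 0 <= u <= 1] `&` [set u | madow_selects C p u y])).

Definition sage_hits (R : realType) (N C : nat) (eta : seq 'I_N -> R) (s : seq 'I_N) : R :=
  \sum_(p <- zip [seq take t s | t <- iota 0 (size s)] s)
     hit_prob C (sage_marg C eta p.1) p.2.

Definition best_fixed (N C : nat) (s : seq 'I_N) : nat :=
  \max_(A : {set 'I_N} | #|A| == C) count (mem A) s.

Definition lnNeC (R : realType) (N C : nat) : R := ln (N%:R * expR 1 / C%:R).

Definition delta (R : realType) (N C : nat) (B l : R) : R :=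
  Num.sqrt (2 * B * C%:R * l * lnNeC R N C) + C%:R * B * lnNeC R N C.

Definition sage_guarantee (R : realType) (N C : nat) (eta : seq 'I_N -> R) : Prop :=
  forall s : seq 'I_N,
    (best_fixed C s)%:R - sage_hits C eta s
      <= delta N C 1 (size s - best_fixed C s)%:R.

(* nodes are paths from the root (seq of labels); the tree is stored as the
   list of its internal nodes (each internal node has N leaf/internal children) *)
Definition lz_init (N : nat) : seq (seq 'I_N) * seq 'I_N := ([:: [::]], [::]).

Definition lz_step (N : nat) (st : seq (seq 'I_N) * seq 'I_N) (y : 'I_N)
  : seq (seq 'I_N) * seq 'I_N :=
  let nxt := rcons st.2 y in
  if nxt \in st.1 then (st.1, nxt)        (* child is internal: descend *)
  else (nxt :: st.1, [::]).              (* child is a leaf: expand it, back to root *)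

Fixpoint lz_states_from (N : nat) (st : seq (seq 'I_N) * seq 'I_N) (s : seq 'I_N)
  : seq (seq 'I_N) :=
  if s is y :: s' then st.2 :: lz_states_from (lz_step st y) s' else [::].

Definition lz_states (N : nat) (x : seq 'I_N) := lz_states_from (lz_init N) x.

(* c(T): number of nodes of the LZ parse tree after all requests of x
   (the created, i.e. internal, nodes, root included) *)
Definition lz_nodes (N : nat) (x : seq 'I_N) : nat := size (foldl (@lz_step N) (lz_init N) x).1.

(* expected hits of the LZ prefetcher: at round t with current node v, the
   Sage copy of v has seen the requests of the earlier rounds at which v was current *)
Definition lz_hits (R : realType) (N C : nat) (eta : seq 'I_N -> R) (x : seq 'I_N) : R :=
  let z := zip (lz_states x) x in
  \sum_(p <- zip (iota 0 (size z)) z)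
     hit_prob C (sage_marg C eta [seq q.2 | q <- take p.1 z & q.1 == p.2.1]) p.2.2.

Definition lz_fixed_misses (N : nat) (g : seq 'I_N -> {set 'I_N}) (x : seq 'I_N) : nat :=
  count (fun p : seq 'I_N * 'I_N => p.2 \notin g p.1) (zip (lz_states x) x).

Definition is_LZ_offline_min (N C : nat) (x : seq 'I_N) (L : nat) : Prop :=
  (exists2 g : seq 'I_N -> {set 'I_N}, (forall v, #|g v| = C) & lz_fixed_misses g x = L) /\
  (forall g : seq 'I_N -> {set 'I_N}, (forall v, #|g v| = C) -> (L <= lz_fixed_misses g x)%N).

(* state at round t: (x_{t-1}, ..., x_{t-k}) (only the available ones for t <= k) *)
Definition markov_states (N k : nat) (x : seq 'I_N) : seq (seq 'I_N) :=
  [seq take k (rev (take t x)) | t <- iota 0 (size x)].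

Definition markov_hits (N k : nat) (f : seq 'I_N -> {set 'I_N}) (x : seq 'I_N) : nat :=
  count (fun p : seq 'I_N * 'I_N => p.2 \in f p.1) (zip (markov_states k x) x).

(* Main.v *)
Require Import Defs.
From HB Require Import structures.
From mathcomp Require Import all_boot all_order all_algebra.
From mathcomp Require Import all_classical all_reals all_analysis.
From mathcomp Require Import zify ring lra.
Import Order.TTheory GRing.Theory Num.Theory.

Section Comb.
Variable N : nat.
Implicit Types (st : seq (seq 'I_N) * seq 'I_N) (s pre : seq 'I_N).

Lemma lz_size st s : size (lz_states_from st s) = size s.
Proof. by elim: s st => //= y s IH st; rewrite IH. Qed.

Lemma lz_mono st s : {subset st.1 <= (foldl (@lz_step N) st s).1}.
Proof.
elim: s st => [|y s IH] st v hv //=; apply: IH.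
by rewrite /lz_step; case: ifP => _ //=; rewrite inE hv orbT.
Qed.

Lemma lz_in st s : [::] \in st.1 -> st.2 \in st.1 ->
  {subset lz_states_from st s <= (foldl (@lz_step N) st s).1}.
Proof.
elim: s st => [|y s IH] st h0 h2 v //=; rewrite inE => /orP[/eqP->|].
  by apply: lz_mono; rewrite /lz_step; case: ifP => _ //=; rewrite inE h2 orbT.
apply: IH; rewrite /lz_step; case: ifP => H //=; rewrite ?inE ?eqxx ?h0 ?orbT //.
Qed.

Definition Ms k pre s := [seq take k (rev (pre ++ take t s)) | t <- iota 0 (size s)].

Lemma Ms_cons k pre y s : Ms k pre (y :: s) = take k (rev pre) :: Ms k (rcons pre y) s.
Proof.
rewrite /Ms /=; congr (_ :: _); first by rewrite cats0.
rewrite -[1]addn0 iotaDl -map_comp; apply: eq_map => t /=.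
by rewrite cat_rcons.
Qed.

Variable (k : nat) (f : seq 'I_N -> {set 'I_N}).

Lemma comb s st pre : (exists p, pre = p ++ st.2) ->
  (count (fun p => p.2 \in f p.1) (zip (Ms k pre s) s) + k * size st.1 + minn (size st.2) k
   <= count (fun p : seq 'I_N * 'I_N => p.2 \in f (take k (rev p.1))) (zip (lz_states_from st s) s)
      + k * (size (foldl (@lz_step N) st s).1).+1)%N.
Proof.
elim: s st pre => [|y s IH] st pre [p Hp].
  rewrite /Ms /=; lia.
rewrite Ms_cons /=.
have key : ((y \in f (take k (rev pre))) + minn (size st.2) k <=
   (y \in f (take k (rev st.2))) + minn (size st.2).+1 k)%N.
  case: (leqP k (size st.2)) => hk.
    rewrite Hp rev_cat takel_cat ?size_rev //; lia.
  case: (y \in _); case: (y \in _); lia.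
case hin: (rcons st.2 y \in st.1).
  have Est : lz_step st y = (st.1, rcons st.2 y) by rewrite /lz_step hin.
  have := IH (lz_step st y) (rcons pre y).
  rewrite Est /= size_rcons => /(_ (ex_intro _ p _)); rewrite Hp rcons_cat => /(_ erefl).
  rewrite -Hp; lia.
have Est : lz_step st y = (rcons st.2 y :: st.1, [::]) by rewrite /lz_step hin.
have := IH (lz_step st y) (rcons pre y).
rewrite Est /= => /(_ (ex_intro _ (rcons pre y) _)); rewrite cats0 => /(_ erefl).
rewrite mulnS; lia.
Qed.
End Comb.
Local Open Scope ring_scope.
Lemma in_zip_fst (A B : eqType) (s : seq A) (t : seq B) x y :
  (x, y) \in zip s t -> x \in s.
Proof.
elim: s t => [|a s IH] [|b t] //=; rewrite !inE => /orP[/eqP[-> _]|/IH ->].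
  by rewrite eqxx.
by rewrite orbT.
Qed.

Lemma regroup (S T : eqType) (R : nmodType) (Phi : S -> seq T -> R)
  (Psi : S -> seq T -> T -> R)
  (h0 : forall v, Phi v [::] = 0)
  (hS : forall v s a, Phi v (rcons s a) = Phi v s + Psi v s a)
  (V : seq S) (uV : uniq V) (z : seq (S * T)) :
  {subset unzip1 z <= V} ->
  \sum_(v <- V) Phi v [seq q.2 | q <- z & q.1 == v] =
  \sum_(p <- zip (iota 0 (size z)) z)
     Psi p.2.1 [seq q.2 | q <- take p.1 z & q.1 == p.2.1] p.2.2.
Proof.
elim/last_ind: z => [|z p IH] hsub.
  by rewrite big_nil big1 // => v _; rewrite h0.
have hsub' : {subset unzip1 z <= V}.
  by move=> v hv; apply: hsub; rewrite /unzip1 map_rcons mem_rcons inE hv orbT.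
have hp : p.1 \in V by apply: hsub; rewrite /unzip1 map_rcons mem_rcons inE eqxx.
rewrite size_rcons -addn1 iotaD -cats1 zip_cat ?size_iota // big_cat big_seq1 /=.
rewrite take_size_cat //.
have -> : \sum_(p0 <- zip (iota 0 (size z)) z)
     Psi p0.2.1 [seq q.2 | q <- take p0.1 (z ++ [:: p]) & q.1 == p0.2.1] p0.2.2 =
   \sum_(p0 <- zip (iota 0 (size z)) z)
     Psi p0.2.1 [seq q.2 | q <- take p0.1 z & q.1 == p0.2.1] p0.2.2.
  rewrite big_seq_cond [RHS]big_seq_cond; apply: eq_bigr => [[i q]] /andP[hi _] /=.
  move/in_zip_fst: hi; rewrite mem_iota add0n => /andP[_ hi].
  by rewrite takel_cat // ltnW.
rewrite -IH //.
rewrite (eq_bigr (fun v => Phi v [seq q.2 | q <- z & q.1 == v] +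
   (if p.1 == v then Psi v [seq q.2 | q <- z & q.1 == v] p.2 else 0))); last first.
  move=> v _; rewrite cats1 filter_rcons.
  case: eqP => [<-|_] /=; first by rewrite map_rcons hS.
  by rewrite addr0.
rewrite big_split /=; congr (_ + _).
rewrite (bigD1_seq p.1) //= eqxx big1 ?addr0 // => v hv.
by rewrite eq_sym (negbTE hv).
Qed.
Lemma sum_zip_iota (T : Type) (R : nmodType) (F : T -> R) (z : seq T) :
  \sum_(p <- zip (iota 0 (size z)) z) F p.2 = \sum_(q <- z) F q.
Proof.
rewrite -(big_map snd xpredT F); have -> // : [seq i.2 | i <- zip (iota 0 (size z)) z] = z; apply: unzip2_zip; by rewrite size_iota.
Qed.

Lemma count_sumR (R : realType) (T : Type) (P : pred T) (z : seq T) :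
  (count P z)%:R = \sum_(q <- z) (P q)%:R :> R.
Proof. by elim: z => [|a z IH]; rewrite ?big_nil ?big_cons //= natrD IH. Qed.

Lemma sqrt_sum (R : realType) (S0T : Type) (y : S0T -> R) (V : seq S0T) :
  (forall v, 0 <= y v) ->
  (\sum_(v <- V) Num.sqrt (y v)) ^+ 2 <= (size V)%:R * \sum_(v <- V) y v.
Proof.
move=> hy; elim: V => [|a V IH]; first by rewrite !big_nil expr0n /= mul0r.
rewrite !big_cons /=.
set S := \sum_(v <- V) _ in IH *; set Y := \sum_(v <- V) _ in IH *.
have S0 : 0 <= S by rewrite /S sumr_ge0 // => v _; exact: sqrtr_ge0.
have Y0 : 0 <= Y by rewrite /Y sumr_ge0.
have sa0 := sqrtr_ge0 (y a).
have sa2 := sqr_sqrtr (hy a).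
set sa := Num.sqrt (y a) in sa0 sa2 *.
rewrite -sa2.
have n0 : (0 : R) <= (size V)%:R by [].
set n := (size V)%:R in IH n0 *.
rewrite -natr1 -/n; clearbody n S Y sa.
have [En|np] := eqVneq n 0.
  rewrite En mul0r in IH; rewrite En.
  have -> : S = 0 by nra.
  nra.
have npos : 0 < n by rewrite lt_def np n0.
have h1 : 0 <= (n * sa - S) ^+ 2 by apply: sqr_ge0.
have h2 : 0 <= n * (n * sa ^+ 2 + Y - 2 * sa * S) by nra.
have h3 : 0 <= n * sa ^+ 2 + Y - 2 * sa * S.
  by rewrite (pmulr_rge0 _ npos) in h2.
nra.
Qed.

Lemma sum_cst (R : realType) (S0T : Type) (V : seq S0T) (c : R) :
  \sum_(v <- V) c = (size V)%:R * c.
Proof.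
elim: V => [|a V IH]; first by rewrite big_nil mul0r.
by rewrite big_cons IH /= -natr1 mulrDl mul1r addrC.
Qed.

Lemma sage_hits_nil (R : realType) N C (eta : seq 'I_N -> R) : sage_hits C eta [::] = 0.
Proof. by rewrite /sage_hits big_nil. Qed.

Lemma sage_hits_rcons (R : realType) N C (eta : seq 'I_N -> R) s a :
  sage_hits C eta (rcons s a) = sage_hits C eta s + hit_prob C (sage_marg C eta s) a.
Proof.
rewrite /sage_hits size_rcons -addn1 iotaD map_cat -cats1 zip_cat; last first.
  by rewrite size_map size_iota.
rewrite big_cat /= big_cons big_nil addr0 take_size_cat //; congr (_ + _).
have -> : [seq take t (s ++ [:: a]) | t <- iota 0 (size s)] = [seq take t s | t <- iota 0 (size s)].
  apply/eq_in_map => t; rewrite mem_iota => /andP[_ ht].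
  by rewrite takel_cat // ltnW.
by [].
Qed.

Theorem theorem3 (R : realType) (N C T k : nat) (x : seq 'I_N)
    (eta : seq 'I_N -> R) (f : seq 'I_N -> {set 'I_N}) (L : nat) :
  (1 <= N)%N -> (1 <= C <= N)%N -> (1 <= T)%N -> size x = T ->
  (forall h, 0 < eta h) -> sage_guarantee C eta ->
  (forall s, #|f s| = C) ->
  is_LZ_offline_min C x L ->
  (markov_hits k f x)%:R - lz_hits C eta x
    <= delta N C (lz_nodes x)%:R L%:R + k%:R * (lz_nodes x)%:R.
Proof.
move=> hN /andP[hC1 hCN] hT hx heta hsage hf [[g0 hg0 hL] _].
set z := zip (lz_states x) x.
set V := undup (lz_states x).
set c := lz_nodes x.
have hsz : size (lz_states x) = size x by rewrite /lz_states lz_size.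
have hsub : {subset unzip1 z <= V}.
  by move=> v; rewrite /z unzip1_zip ?hsz // /V mem_undup.
have uV : uniq V by apply: undup_uniq.
have sizeV : (size V <= c)%N.
  apply: uniq_leq_size => // v; rewrite mem_undup; apply: lz_in; by rewrite inE.
pose sv v := [seq q.2 | q <- z & q.1 == v].
pose b v := best_fixed C (sv v).
pose l v := (size (sv v) - b v)%N.
have E1 : lz_hits C eta x = \sum_(v <- V) sage_hits C eta (sv v).
  rewrite /lz_hits -/z; symmetry.
  apply: (@regroup _ _ _ (fun _ s => sage_hits C eta s)
                  (fun _ s a => hit_prob C (sage_marg C eta s) a)) => //.
  - by move=> _; apply: sage_hits_nil.
  - by move=> _ s a; apply: sage_hits_rcons.
have E2 : forall v, (b v)%:R - sage_hits C eta (sv v) <= delta N C 1 (l v)%:R.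
  by move=> v; apply: hsage.
pose g v := f (take k (rev v)).
have E3 : (count (fun p : (seq 'I_N * 'I_N)%type => p.2 \in g p.1) z)%:R
          = \sum_(v <- V) (count (fun a => a \in g v) (sv v))%:R :> R.
  rewrite count_sumR -(@sum_zip_iota _ _ (fun p : (seq 'I_N * 'I_N)%type => ((p.2 \in g p.1) : nat)%:R : R)).
  symmetry.
  apply: (@regroup _ _ _ (fun v s => (count (fun a => a \in g v) s)%:R : R)
                  (fun v s a => ((a \in g v) : nat)%:R : R)) => //.
  by move=> v s a; rewrite -cats1 count_cat /= addn0 natrD.
have E3' : forall v, (count (fun a => a \in g v) (sv v) <= b v)%N.
  move=> v; rewrite /b /best_fixed.
  apply: (@leq_bigmax_cond _ (fun A : {set 'I_N} => #|A| == C)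
     (fun A => count (mem A) (sv v)) (g v)).
  by rewrite /g hf.
have E4 : (markov_hits k f x <= count (fun p : (seq 'I_N * 'I_N)%type => p.2 \in g p.1) z + k * c)%N.
  have := @comb N k f x (@lz_init N) [::] (ex_intro _ [::] erefl).
  rewrite /= muln1 /c /lz_nodes /markov_hits /z /lz_states /g.
  change (@Ms N k [::] x) with (markov_states k x).
  rewrite mulnS min0n addn0 => H; rewrite -(leq_add2r k); apply: (leq_trans H); by rewrite -[in leqRHS]addnA [(k + _)%N]addnC.
have E5 : (L%:R : R) = \sum_(v <- V) (count (fun a => a \notin g0 v) (sv v))%:R.
  rewrite -hL /lz_fixed_misses -/z count_sumR.
  rewrite -(@sum_zip_iota _ _ (fun p : (seq 'I_N * 'I_N)%type => ((p.2 \notin g0 p.1) : nat)%:R : R)).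
  symmetry.
  apply: (@regroup _ _ _ (fun v s => (count (fun a => a \notin g0 v) s)%:R : R)
                  (fun v s a => ((a \notin g0 v) : nat)%:R : R)) => //.
  by move=> v s a; rewrite -cats1 count_cat /= addn0 natrD.
have E5' : forall v, (l v <= count (fun a => a \notin g0 v) (sv v))%N.
  move=> v; have := count_predC (fun a => a \in g0 v) (sv v).
  have : (count (fun a => a \in g0 v) (sv v) <= b v)%N.
    rewrite /b /best_fixed.
    apply: (@leq_bigmax_cond _ (fun A : {set 'I_N} => #|A| == C)
       (fun A => count (mem A) (sv v)) (g0 v)).
    by rewrite hg0.
  have -> : count (fun a => a \notin g0 v) (sv v) = count (predC (fun a => a \in g0 v)) (sv v).
    by apply: eq_count.
  move=> h1 h2; rewrite /l -h2; apply: (leq_trans (leq_sub2l _ h1)); by rewrite addKn.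
have ln0 : 0 <= lnNeC R N C.
  rewrite /lnNeC; apply: ln_ge0.
  have C0 : (0 : R) < C%:R by rewrite ltr0n.
  rewrite ler_pdivlMr // mul1r.
  have e1 : (1 : R) <= expR 1 by have := expR_ge1Dx (1 : R); lra.
  have hCNr : (C%:R : R) <= N%:R by rewrite ler_nat.
  nra.
have E6 : \sum_(v <- V) delta (R:=R) N C 1 (l v)%:R <= delta (R:=R) N C c%:R L%:R.
  rewrite /delta big_split /= sum_cst.
  set K := lnNeC R N C.
  have hy : forall v, 0 <= 2 * 1 * C%:R * (l v)%:R * K.
    by move=> v; rewrite !mulr_ge0 ?ler0n.
  have sq := @sqrt_sum _ _ (fun v => 2 * 1 * C%:R * (l v)%:R * K) V hy.
  have SY : \sum_(v <- V) 2 * 1 * C%:R * (l v)%:R * K = (2 * C%:R * K) * \sum_(v <- V) (l v)%:R.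
    rewrite mulr_sumr; apply: eq_bigr => v _; ring.
  have sumL : \sum_(v <- V) ((l v)%:R : R) <= L%:R.
    by rewrite E5; apply: ler_sum => v _; rewrite ler_nat.
  have sumL0 : 0 <= \sum_(v <- V) ((l v)%:R : R) by apply: sumr_ge0 => v _; rewrite ler0n.
  have cV : ((size V)%:R : R) <= c%:R by rewrite ler_nat.
  have C0 : (0 : R) <= C%:R by rewrite ler0n.
  have V0 : (0 : R) <= (size V)%:R by rewrite ler0n.
  set Sq := \sum_(v <- V) _ in sq *.
  have Sq0 : 0 <= Sq by apply: sumr_ge0 => v _; apply: sqrtr_ge0.
  have : Sq <= Num.sqrt (2 * c%:R * C%:R * L%:R * K).
    rewrite -(ger0_norm Sq0) -sqrtr_sqr ler_sqrt; last first.
      by rewrite !mulr_ge0 ?ler0n.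
    apply: (le_trans sq); rewrite SY.
    have h1 : 0 <= 2 * C%:R * K by rewrite !mulr_ge0 ?ler0n.
    have h2 : (2 * C%:R * K) * \sum_(v <- V) ((l v)%:R : R) <= (2 * C%:R * K) * L%:R.
      by rewrite ler_wpM2l.
    have h3 : 0 <= (2 * C%:R * K) * \sum_(v <- V) ((l v)%:R : R) by rewrite mulr_ge0.
    have h4 : (0 : R) <= L%:R by rewrite ler0n.
    nra.
  move=> hSq.
  have : (size V)%:R * (C%:R * 1 * K) <= C%:R * c%:R * K.
    have : 0 <= C%:R * K by rewrite mulr_ge0.
    nra.
  lra.
rewrite E1.
have S2 : \sum_(v <- V) ((b v)%:R - sage_hits C eta (sv v)) <= \sum_(v <- V) delta N C 1 (l v)%:R.
  by apply: ler_sum => v _; apply: E2.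
rewrite sumrB in S2.
have S3 : (count (fun p : (seq 'I_N * 'I_N)%type => p.2 \in g p.1) z)%:R <= \sum_(v <- V) ((b v)%:R : R).
  by rewrite E3; apply: ler_sum => v _; rewrite ler_nat.
have S4 : ((markov_hits k f x)%:R : R) <= (count (fun p : (seq 'I_N * 'I_N)%type => p.2 \in g p.1) z)%:R + k%:R * c%:R.
  by rewrite -natrM -natrD ler_nat.
lra.
Qed.
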